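(* Let $X_0$ be a Polish space, $\mathcal{I}$ a $\sigma$-ideal with Borel base on $X_0$, and $X\subseteq X_0$ a Polish subspace. Let $\mathcal{F}$ be a family of functions $X\to X_0$ and $\mathfrak{I}=\{\mathcal{I}_f: f\in\mathcal{F}\}$ such that the pair $(\mathcal{F},\mathfrak{I})$ is fine in $X\subseteq X_0$, and assume (1) $|\mathcal{F}|\le \sup\{\mathrm{Cof}(\mathcal{I}_f): f\in\mathcal{F}\}$; (2) $\sup\{\mathrm{Cof}(\mathcal{I}_f): f\in\mathcal{F}\}\le \mathrm{Cov}(\mathcal{F},\mathfrak{I})$. Then there exists $A\subseteq X$ such that for every $f\in\mathcal{F}$ the image $f[A]$ is completely $\mathcal{I}_f$-nonmeasurable in $f[X]$.
   Context: A $\sigma$-ideal on a set $Y$ is a family of subsets closed under subsets and countable unions and containing all singletons; it has Borel base if every member is contained in a Borel member. For a Polish space $Y$ and a $\sigma$-ideal $\mathcal{J}$ with Borel base on $Y$, $\mathrm{Cof}(\mathcal{J})=\min\{|\mathcal{B}|:\mathcal{B}\subseteq \mathrm{Bor}(Y)\setminus\mathcal{J},\ \forall A\in \mathrm{Bor}(Y)\setminus\mathcal{J}\ \exists B\in\mathcal{B}\ B\subseteq A\}$. A set $S\subseteq Y$ is completely $\mathcal{J}$-nonmeasurable in $Y$ if for every Borel $B\subseteq Y$ with $B\notin\mathcal{J}$ we have $S\cap B\neq\emptyset$ and $B\setminus S\neq\emptyset$. The pair $(\mathcal{F},\mathfrak{I})$, where $\mathcal{F}$ is a family of functions from $X$ to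 $X_0$ and $\mathfrak{I}=\{\mathcal{I}_f:f\in\mathcal{F}\}$, is fine in $X\subseteq X_0$ if for every $f\in\mathcal{F}$, $f[X]$ is a Polish subspace of $X_0$ and $\mathcal{I}_f$ is a $\sigma$-ideal with Borel base on $f[X]$ containing all singletons of $f[X]$. Define $\mathrm{Cov}(\mathcal{F},\mathfrak{I})$ as the minimum of $|Z|$ over all $Z\subseteq X_0$ for which there exist $f\in\mathcal{F}$, a Borel set $B\subseteq f[X]$ with $B\notin\mathcal{I}_f$, and $\mathcal{F}_0\subseteq\mathcal{F}$ with $|\mathcal{F}_0|\le|Z|$ such that $f^{-1}[B]\subseteq\bigcup\{h^{-1}[Z]: h\in\mathcal{F}_0\}$. *)

(* Defs.v *)
From HB Require Import structures.
From mathcomp Require Import all_boot all_order all_algebra.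
From mathcomp Require Import all_classical all_reals all_analysis.
From mathcomp Require Import Rstruct.
Set Implicit Arguments. Unset Strict Implicit. Unset Printing Implicit Defensive.
Import Order.TTheory GRing.Theory Num.Theory.
Local Open Scope classical_set_scope.
Local Open Scope ring_scope.

Notation RR := Rdefinitions.R.

Section Defs.
Context {T : topologicalType}.

Definition subspace_borel (Y : set T) : set (set T) :=
  <<s Y, [set O `&` Y | O in [set O : set T | open O]] >>.

Definition borel_in (Y B : set T) : Prop := B `<=` Y /\ subspace_borel Y B.

Definition separable_subspace (Y : set T) : Prop :=
  exists D : set T, [/\ D `<=` Y, countable D &
    forall O : set T, open O -> O `&` Y !=set0 -> O `&` D !=set0].

Definition completely_metrizable_subspace (Y : set T) : Prop :=
  exists d : T -> T -> RR,
  [/\ ((forall x y, Y x -> Y y -> 0 <= d x y) /\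
      (forall x y, Y x -> Y y -> (d x y = 0 <-> x = y)) /\
      (forall x y, Y x -> Y y -> d x y = d y x) /\
      (forall x y z, Y x -> Y y -> Y z -> d x z <= d x y + d y z)),
      (forall (O : set T) x, open O -> O x -> Y x ->
          exists2 e : RR, 0 < e & forall y, Y y -> d x y < e -> O y),
      (forall x (e : RR), Y x -> 0 < e ->
          exists O : set T, [/\ open O, O x & forall y, Y y -> O y -> d x y < e])
    & (forall u : nat -> T, (forall n, Y (u n)) ->
         (forall e : RR, 0 < e -> exists N, forall m n, (N <= m)%N -> (N <= n)%N ->
              d (u m) (u n) < e) ->
         exists2 x, Y x & forall e : RR, 0 < e -> exists N, forall n, (N <= n)%N ->
              d (u n) x < e)].

Definition polish_subspace (Y : set T) : Prop :=
  separable_subspace Y /\ completely_metrizable_subspace Y.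

Definition sigma_ideal_Borel_base (Y : set T) (J : set (set T)) : Prop :=
  [/\ (forall A, J A -> A `<=` Y),
      (forall A B, J A -> B `<=` A -> J B),
      (forall A : nat -> set T, (forall n, J (A n)) -> J (\bigcup_n A n)),
      (forall y, Y y -> J [set y])
    & (forall A, J A -> exists B, [/\ borel_in Y B, J B & A `<=` B])].

(* Cof(J) <= |M|  (Cof(J) is a minimum of cardinals, hence attained, so this is
   equivalent to the existence of a witnessing family of size <= |M|). *)
Definition cof_le (Y : set T) (J : set (set T)) (U : Type) (M : set U) : Prop :=
  exists Bf : set (set T),
  [/\ Bf `<=` [set B | borel_in Y B /\ ~ J B],
      (forall A, borel_in Y A -> ~ J A -> exists2 B, Bf B & B `<=` A)
    & (Bf #<= M)%card].

Definition completely_nonmeasurable (J : set (set T)) (Y S : set T) : Prop :=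
  forall B, borel_in Y B -> ~ J B -> S `&` B !=set0 /\ B `\` S !=set0.

Definition fine_pair (X : set T) (F : set (X -> T)) (I : (X -> T) -> set (set T))
  : Prop :=
  forall f, F f -> polish_subspace (range f) /\ sigma_ideal_Borel_base (range f) (I f).

End Defs.

(* Main.v *)
Require Import Defs.
From HB Require Import structures.
From mathcomp Require Import all_boot all_order all_algebra.
From mathcomp Require Import all_classical all_reals all_analysis.
From mathcomp Require Import wochoice.
Local Open Scope classical_set_scope.

Section Helpers.
Local Open Scope card_scope.

Lemma le_of_inj {T U} (A : set T) (B : set U) (f : T -> U) :
  (forall x, A x -> B (f x)) ->
  (forall x y, A x -> A y -> f x = f y -> x = y) -> A #<= B.
Proof.
move=> fAB finj.
have : $|{injfun A >-> B}|.
  apply/injfunPex; exists f.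
    by move=> x /fAB.
  by move=> x y /set_mem Ax /set_mem Ay; apply: finj.
by case=> g; exact: inj_card_le.
Qed.

Lemma inj_of_le {T U} (u0 : U) (A : set T) (B : set U) : A #<= B ->
  exists f : T -> U, (forall x, A x -> B (f x)) /\
    (forall x y, A x -> A y -> f x = f y -> x = y).
Proof.
move=> /card_leP[g].
pose f x := match pselect (A x) with
  | left h => val (g (exist _ x (mem_set h))) | right _ => u0 end.
exists f; split.
  move=> x Ax; rewrite /f; case: pselect => // h.
  exact: set_valP.
move=> x y Ax Ay; rewrite /f; case: pselect => // hx; case: pselect => // hy.
move=> /val_inj /(@inj _ _ _ g) => /(_ (mem_set I) (mem_set I)) [].
by [].
Qed.

Lemma proper_of {T} (A B : set T) x : A `<=` B -> B x -> ~ A x -> A `<` B.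
Proof.
move=> AB Bx nAx; rewrite properEneq; split => //.
by apply/negP => /eqP eAB; apply: nAx; rewrite eAB.
Qed.

Lemma choose_fun {T U} (u0 : U) (P : T -> U -> Prop) :
  exists f : T -> U, forall x, (exists y, P x y) -> P x (f x).
Proof.
have H : forall x, exists y, (exists y, P x y) -> P x y.
  move=> x; have [[y Py]|N] := pselect (exists y, P x y).
    by exists y.
  by exists u0 => h; exfalso; exact: N.
have [f hf] := choice H.
by exists f.
Qed.

Lemma card_comparable {T1 T2} (A : set T1) (B : set T2) : A #<= B \/ B #<= A.
Proof.
pose Pr (R : set (T1 * T2)) := [/\ R `<=` A `*` B,
  (forall x y y', R (x,y) -> R (x,y') -> y = y') &
  (forall x x' y, R (x,y) -> R (x',y) -> x = x')].
have [R [[RAB Rf Ri] Rmax]] : exists R, Pr R /\ forall R', R `<` R' -> ~ Pr R'.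
  apply: Zorn_bigcup => Fs FsP Ftot; split.
  - move=> [x y] [R FR Rxy]; case: (FsP _ FR) => + _ _; apply; exact: Rxy.
  - move=> x y y' [R1 F1 h1] [R2 F2 h2]; case: (Ftot _ _ F1 F2) => sub.
      by case: (FsP _ F2) => _ + _; apply; [exact: sub _ h1|exact: h2].
    by case: (FsP _ F1) => _ + _; apply; [exact: h1|exact: sub _ h2].
  - move=> x x' y [R1 F1 h1] [R2 F2 h2]; case: (Ftot _ _ F1 F2) => sub.
      by case: (FsP _ F2) => _ _; apply; [exact: sub _ h1|exact: h2].
    by case: (FsP _ F1) => _ _; apply; [exact: h1|exact: sub _ h2].
have [allA|] := pselect (forall a, A a -> exists b, R (a,b)).
  left; have [[a0 Aa0]|nA] := pselect (exists a, A a); last first.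
    have -> : A = set0 by apply/seteqP; split => x // Ax; apply: nA; exists x.
    exact: card_ge0.
  have [b0 _] := allA a0 Aa0.
  have [f hf] := choose_fun b0 (fun a b => R (a, b)).
  apply: (@le_of_inj _ _ _ _ f).
    by move=> x Ax; have := RAB _ (hf x (allA x Ax)); case.
  move=> x y Ax Ay fxy; apply: (Ri x y (f x)) => //.
    exact: hf (allA x Ax).
  by rewrite fxy; exact: hf (allA y Ay).
move=> /existsNP[a] /not_implyP[Aa noa].
right.
have allB : forall b, B b -> exists a', R (a', b).
  move=> b Bb; apply: contrapT => nob.
  apply: (Rmax (R `|` [set (a, b)])).
    apply: (@proper_of _ _ _ (a, b)).
    - by move=> ? ?; left.
    - by right.
    - by move=> Rab; apply: noa; exists b.
  split.
  - by move=> p [/RAB //|->].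
  - move=> x y y' [Rxy|[= ex ey]] [Rxy'|[= ex' ey']]; subst => //.
    + exact: Rf Rxy Rxy'.
    + by exfalso; apply: noa; exists y.
    + by exfalso; apply: noa; exists y'.
  - move=> x x' y [Rxy|[= ex ey]] [Rxy'|[= ex' ey']]; subst => //.
    + exact: Ri Rxy Rxy'.
    + by exfalso; apply: nob; exists x.
    + by exfalso; apply: nob; exists x'.
have [f hf] := choose_fun a (fun b a' => R (a', b)).
apply: (@le_of_inj _ _ _ _ f).
  by move=> x Bx; have := RAB _ (hf x (allB x Bx)); case.
move=> x y Bx By fxy; apply: (Rf (f x) x y) => //.
  exact: hf (allB x Bx).
by rewrite fxy; exact: hf (allB y By).
Qed.

Lemma chain2 {T} {Fs : set (set T)} : total_on Fs subset ->
  forall {G1 G2}, Fs G1 -> Fs G2 -> exists2 G, Fs G & G1 `<=` G /\ G2 `<=` G.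
Proof.
move=> tot G1 G2 F1 F2; case: (tot _ _ F1 F2) => sub.
  by exists G2 => //; split => // x.
by exists G1 => //; split => // x.
Qed.


Definition dom2 {V : Type} (G : set ((V * V) * V)) : set V :=
  [set a | exists b, G ((a, a), b)].

Definition Pg {V : Type} (K : set V) (G : set ((V * V) * V)) :=
  [/\ (forall p b b', G (p, b) -> G (p, b') -> b = b'),
      (forall p q b, G (p, b) -> G (q, b) -> p = q),
      (forall p b, G (p, b) -> [/\ dom2 G p.1, dom2 G p.2 & dom2 G b]),
      (forall a a', dom2 G a -> dom2 G a' -> exists b, G ((a, a'), b))
    & dom2 G `<=` K].

Lemma hessenberg (V : Type) (K : set V) : infinite_set K ->
  exists h : V * V -> V, (forall p, (K `*` K) p -> K (h p)) /\
    (forall p q, (K `*` K) p -> (K `*` K) q -> h p = h q -> p = q).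
Proof.
move=> Kinf.
have [v0 Kv0] := infinite_setN0 Kinf.
have [nu [nuK nuinj]] := inj_of_le v0 _ _ ((infiniteP K).1 Kinf).
have nuinj' : forall i j, nu i = nu j -> i = j by move=> i j; apply: nuinj.
have pinj := pcan_inj (@pickleK (nat * nat)%type).
pose G0 : set ((V * V) * V) :=
  [set t | exists i j, t = ((nu i, nu j), nu (pickle (i, j)))].
pose P G := G = set0 \/ (Pg K G /\ G0 `<=` G).
have G0d : forall i, dom2 G0 (nu i).
  by move=> i; exists (nu (pickle (i, i))); exists i, i.
have PG0 : Pg K G0.
  split.
  - move=> p b b' [i [j [-> ->]]] [i' [j' [/nuinj' ei /nuinj' ej ->]]].
    by subst.
  - move=> p q b [i [j [-> ->]]] [i' [j' [-> /nuinj' /pinj [ei ej]]]].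
    by subst.
  - by move=> p b [i [j [-> ->]]] /=; split; apply: G0d.
  - move=> a a' [b [i [j [[-> _] _]]]] [b' [i' [j' [[-> _] _]]]].
    by exists (nu (pickle (i, i'))); exists i, i'.
  - by move=> a [b [i [j [[-> _] _]]]]; exact: nuK.
have [G [PG Gmax]] : exists G, P G /\ forall G', G `<` G' -> ~ P G'.
  apply: Zorn_bigcup => Fs FsP Ftot.
  have [[G1 FG1 [t G1t]]|allE] := pselect (exists2 G, Fs G & G !=set0); last first.
    left; apply/seteqP; split => // t [G FG Gt]; apply: allE; exists G => //.
    by exists t.
  have PgF : forall G t, Fs G -> G t -> Pg K G /\ G0 `<=` G.
    move=> G u FG Gu; case: (FsP _ FG) => // eG; by rewrite eG in Gu.
  have domU : forall a, dom2 (\bigcup_(X in Fs) X) a ->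
      exists G, [/\ Fs G, G !=set0 & dom2 G a].
    move=> a [b [G FG Gb]]; exists G; split => //; first by exists ((a, a), b).
    by exists b.
  have domS : forall G a, Fs G -> dom2 G a -> dom2 (\bigcup_(X in Fs) X) a.
    by move=> G a FG [b Gb]; exists b; exists G.
  right; split; last first.
    by move=> u G0u; exists G1 => //; apply: (PgF _ _ FG1 G1t).2.
  split.
  - move=> p b b' [Ga FGa Gab] [Gb FGb Gbb].
    have [G FG [sa sb]] := chain2 Ftot FGa FGb.
    have [[f _ _ _ _] _] := PgF _ _ FG (sa _ Gab).
    exact: f (sa _ Gab) (sb _ Gbb).
  - move=> p q b [Ga FGa Gab] [Gb FGb Gbb].
    have [G FG [sa sb]] := chain2 Ftot FGa FGb.
    have [[_ f _ _ _] _] := PgF _ _ FG (sa _ Gab).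
    exact: f (sa _ Gab) (sb _ Gbb).
  - move=> p b [Ga FGa Gab].
    have [[_ _ f _ _] _] := PgF _ _ FGa Gab.
    by case: (f _ _ Gab) => d1 d2 d3; split; apply: (domS Ga).
  - move=> a a' /domU[Ga [FGa [ta Gta] da]] /domU[Gb [FGb _ db]].
    have [G FG [sa sb]] := chain2 Ftot FGa FGb.
    have [[_ _ _ f _] _] := PgF _ _ FG (sa _ Gta).
    have [b Gab] : exists b, G ((a, a'), b).
      apply: f.
        by case: da => b hb; exists b; apply: sa.
      by case: db => b hb; exists b; apply: sb.
    by exists b; exists G.
  - move=> a /domU[Ga [FGa [ta Gta] da]].
    have [[_ _ _ _ f] _] := PgF _ _ FGa Gta.
    exact: f.
have GN0 : G <> set0.
  move=> eG; apply: (Gmax G0); last by right; split.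
  rewrite eG; apply: (@proper_of _ _ _ ((nu 0, nu 0), nu (pickle (0, 0)))) => //.
  by exists 0, 0.
have [PgG G0G] : Pg K G /\ G0 `<=` G by case: PG.
case: PgG => Gf Gi Gd Gt GK.
set A := dom2 G.
have [g hg] := choose_fun v0 (fun p b => G (p, b)).
have gA : forall u v, A u -> A v -> G ((u, v), g (u, v)).
  by move=> u v Au Av; apply: (hg); apply: (Gt).
have gAA : forall u v, A u -> A v -> A (g (u, v)).
  by move=> u v Au Av; case: (Gd _ _ (gA _ _ Au Av)).
have ginj : forall u v u' v', A u -> A v -> A u' -> A v' ->
    g (u, v) = g (u', v') -> (u, v) = (u', v').
  move=> u v u' v' Au Av Au' Av' e; apply: (Gi _ _ (g (u, v))).
    exact: gA.
  by rewrite e; exact: gA.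
have nuA : forall i, A (nu i).
  by move=> i; exists (nu (pickle (i, i))); apply: G0G; exists i, i.
have [iota [iotaA iotainj]] : exists iota : V -> V, (forall k, K k -> A (iota k)) /\
    (forall k k', K k -> K k' -> iota k = iota k' -> k = k').
  case: (card_comparable (K `\` A) A) => le.
    have [kap [kapA kapinj]] := inj_of_le v0 _ _ le.
    exists (fun k => if pselect (A k) is left _ then g (k, nu 0)
                     else g (kap k, nu 1)); split.
      move=> k Kk; case: pselect => Ak; apply: (gAA) => //.
      exact: kapA.
    move=> k k' Kk Kk'; case: pselect => Ak; case: pselect => Ak'.
    - by move/ginj => /(_ Ak (nuA 0) Ak' (nuA 0)) [].
    - move/ginj => /(_ Ak (nuA 0) (kapA _ (conj Kk' Ak')) (nuA 1)) [_].
      by move/nuinj'.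
    - move/ginj => /(_ (kapA _ (conj Kk Ak)) (nuA 1) Ak' (nuA 0)) [_].
      by move/nuinj'.
    - move/ginj => /(_ (kapA _ (conj Kk Ak)) (nuA 1) (kapA _ (conj Kk' Ak')) (nuA 1)) [].
      by move/kapinj; apply.
  exfalso.
  have [j [jA jinj]] := inj_of_le v0 _ _ le.
  pose C := j @` A.
  have [m hm] := choose_fun v0 (fun u a => A a /\ j a = u).
  have mC : forall u, C u -> A (m u) /\ j (m u) = u.
    by move=> u [a Aa <-]; apply: hm; exists a.
  have CnA : forall u, C u -> ~ A u by move=> u [a Aa <-]; case: (jA _ Aa).
  have CK : forall u, C u -> K u by move=> u [a Aa <-]; case: (jA _ Aa).
  pose e u := if pselect (A u) is left _ then u else m u.
  pose tg u v := if pselect (A u) is left _ then nu 0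
                 else if pselect (A v) is left _ then nu 1 else nu 2.
  pose val u v := j (g (g (e u, e v), tg u v)).
  have eA : forall u, (A `|` C) u -> A (e u).
    by move=> u ACu; rewrite /e; case: pselect => // Au; case: ACu => // /mC[].
  have tgA : forall u v, A (tg u v).
    by move=> u v; rewrite /tg; case: pselect => _; last case: pselect => _.
  have valC : forall u v, (A `|` C) u -> (A `|` C) v -> C (val u v).
    move=> u v ACu ACv; exists (g (g (e u, e v), tg u v)) => //.
    by apply: (gAA) => //; apply: (gAA); apply: (eA).
  pose N := [set t | exists u v, [/\ (A `|` C) u, (A `|` C) v, ~ (A u /\ A v) &
                     t = ((u, v), val u v)]].
  pose G' := G `|` N.
  have GdA : forall p b, G (p, b) -> [/\ A p.1, A p.2 & A b] by move=> p b /Gd.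
  have dGsub : dom2 G' `<=` A `|` C.
    move=> a [b [Gab|[u [v [ACu _ _ [-> _ _]]]]]]; last exact: ACu.
    by left; exists b.
  have subdG : A `|` C `<=` dom2 G'.
    move=> a [Aa|Ca].
      by case: Aa => b Gb; exists b; left.
    exists (val a a); right; exists a, a; split => //; [by right|by right|].
    by move=> [Aa _]; apply: (CnA _ Ca).
  have tgE : forall u v u' v', ~ (A u /\ A v) -> ~ (A u' /\ A v') ->
      tg u v = tg u' v' -> (A u <-> A u') /\ (A v <-> A v').
    move=> u v u' v' nuv nuv'; rewrite /tg.
    case: (pselect (A u)) => Au; case: (pselect (A v)) => Av;
      case: (pselect (A u')) => Au'; case: (pselect (A v')) => Av' //= e01;
      try (by exfalso; apply: nuv; split); try (by exfalso; apply: nuv'; split);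
      try (by move/nuinj': e01);
      by split; split.
  have eE : forall u u', (A `|` C) u -> (A `|` C) u' -> (A u <-> A u') ->
      e u = e u' -> u = u'.
    move=> u u' ACu ACu' [h1 h2]; rewrite /e.
    case: pselect => Au; case: pselect => Au' // emu.
    - by exfalso; apply: Au'; apply: h1.
    - by exfalso; apply: Au; apply: h2.
    - have Cu : C u by case: ACu.
      have Cu' : C u' by case: ACu'.
      by rewrite -(mC _ Cu).2 -(mC _ Cu').2 emu.
  have PG' : Pg K G'.
    split.
    - move=> p b b' [Gb|[u [v [_ _ nuv [ep eb]]]]] [Gb'|[u' [v' [_ _ nuv' [ep' eb']]]]].
      + exact: Gf Gb Gb'.
      + by exfalso; apply: nuv'; case: (GdA _ _ Gb); rewrite ep'.
      + by exfalso; apply: nuv; case: (GdA _ _ Gb'); rewrite ep.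
      + by subst; case: ep' => -> ->.
    - move=> p q b [Gb|[u [v [ACu ACv nuv [ep eb]]]]] [Gb'|[u' [v' [ACu' ACv' nuv' [ep' eb']]]]].
      + exact: Gi Gb Gb'.
      + by exfalso; case: (GdA _ _ Gb) => _ _; rewrite eb'; apply: (CnA); apply: (valC).
      + by exfalso; case: (GdA _ _ Gb') => _ _; rewrite eb; apply: (CnA); apply: (valC).
      + subst; move: eb'; rewrite /val => /jinj.
        have hA : forall u v, (A `|` C) u -> (A `|` C) v ->
            A (g (g (e u, e v), tg u v)).
          by move=> ? ? ? ?; apply: (gAA) => //; apply: (gAA); apply: (eA).
        move=> /(_ (hA _ _ ACu ACv) (hA _ _ ACu' ACv')) /ginj.
        move=> /(_ (gAA _ _ (eA _ ACu) (eA _ ACv)) (tgA _ _)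
                   (gAA _ _ (eA _ ACu') (eA _ ACv')) (tgA _ _)) [].
        move=> eg.
        have [e1 e2] := ginj _ _ _ _ (eA _ ACu) (eA _ ACv) (eA _ ACu') (eA _ ACv') eg.
        move=> etg; have [h1 h2] := tgE _ _ _ _ nuv nuv' etg.
        by rewrite (eE _ _ ACu ACu' h1 e1) (eE _ _ ACv ACv' h2 e2).
    - move=> p b [Gb|[u [v [ACu ACv nuv [ep eb]]]]].
        case: (GdA _ _ Gb) => d1 d2 d3; split; apply: (subdG); by left.
      subst; split; apply: (subdG) => //=.
      by right; apply: (valC).
    - move=> a a' /dGsub ACa /dGsub ACa'.
      have [[Aa Aa']|nAA] := pselect (A a /\ A a').
        by exists (g (a, a')); left; apply: (gA).
      by exists (val a a'); right; exists a, a'.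
    - move=> a /dGsub [/GK //|/CK //].
  apply: (Gmax G'); last by right; split => // t /G0G; left.
  have [c Cc] : exists c, C c by exists (j (nu 0)); exists (nu 0).
  apply: (@proper_of _ _ _ ((c, c), val c c)).
  - by move=> t Gt'; left.
  - right; exists c, c; split => //; [by right|by right|].
    by move=> [Ac _]; apply: (CnA _ Cc).
  - by move/GdA => [/= Ac _ _]; apply: (CnA _ Cc).
exists (fun p => g (iota p.1, iota p.2)); split.
  by move=> [k k'] [/= Kk Kk']; apply: (GK); apply: (gAA); apply: (iotaA).
move=> [k1 k2] [k1' k2'] [/= K1 K2] [/= K1' K2'] /ginj.
move=> /(_ (iotaA _ K1) (iotaA _ K2) (iotaA _ K1') (iotaA _ K2')) [].
by move=> /iotainj -> // /iotainj -> //.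
Qed.


Lemma borel_setD {T : topologicalType} {Y B G : set T} :
  borel_in Y B -> borel_in Y G -> borel_in Y (B `\` G).
Proof.
move=> [BY bB] [GY bG]; split; first by move=> x [/BY].
have -> : B `\` G = Y `\` (\bigcup_i bigcup2 (Y `\` B) G i).
  rewrite bigcup2E; apply/seteqP; split.
    by move=> x [Bx nGx]; split; [exact: BY|move=> [[_ ]|]].
  move=> x [Yx nU]; split.
    by apply: contrapT => nBx; apply: nU; left.
  by move=> Gx; apply: nU; right.
apply: sigma_algebraCD; apply: sigma_algebra_bigcup => -[|[|i]] /=.
- exact: sigma_algebraCD.
- exact: bG.
- exact: sigma_algebra0.
Qed.

Lemma ideal_setU {T : topologicalType} {Y : set T} {J A B} :
  sigma_ideal_Borel_base Y J -> J A -> J B -> J (A `|` B).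
Proof.
move=> [_ sub cup _ _] JA JB; rewrite -bigcup2E; apply: cup => -[|[|i]] //=.
by apply: (sub A) => //.
Qed.

Lemma ideal0 {T : topologicalType} {Y : set T} {J} :
  sigma_ideal_Borel_base Y J -> Y !=set0 -> J set0.
Proof.
by move=> [_ sub _ sing _] [y Yy]; apply: (sub [set y]) => //; apply: sing.
Qed.

Lemma cof_countable_false {T : topologicalType} (Y : set T) J {U} (W : set U) B :
  sigma_ideal_Borel_base Y J -> Y !=set0 -> cof_le Y J W -> countable W ->
  borel_in Y B -> ~ J B -> False.
Proof.
move=> SJ [y0 Yy0] [Bf [BfB Bfcof BfW]] cW bB nJB.
have J0 := ideal0 SJ (ex_intro _ y0 Yy0).
case: SJ => JY Jsub Jcup Jsing Jbase.
have [psi [_ psiinj]] := inj_of_le 0%N _ _ (card_le_trans BfW cW).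
have [pt hpt] := choose_fun y0 (fun (c : set T) y => c y).
have ptc : forall c, Bf c -> c (pt c).
  move=> c Bfc; apply: hpt; apply: contrapT => nc.
  have c0 : c = set0 by apply/seteqP; split => // x cx; apply: nc; exists x.
  by case: (BfB _ Bfc) => _; rewrite c0.
pose An n := [set y | exists c, [/\ Bf c, c `<=` B, psi c = n & y = pt c]].
have JAn : forall n, J (An n).
  move=> n; have [[y [c [Bfc cB pc _]]]|none] := pselect (exists y, An n y).
    apply: (Jsub [set pt c]); first by apply: Jsing; case: (BfB _ Bfc) => -[cY _] _; apply: cY; exact: ptc.
    move=> z [c' [Bfc' c'B pc' ->]].
    by rewrite (psiinj _ _ Bfc' Bfc) // pc pc'.
  apply: (Jsub set0) => // z Az; apply: none; by exists z.
have [G [bG JG EG]] := Jbase _ (Jcup _ JAn).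
have bBG := borel_setD bB bG.
have nJBG : ~ J (B `\` G).
  move=> JBG; apply: nJB; apply: (Jsub _ _ (ideal_setU (And5 JY Jsub Jcup Jsing Jbase) JBG JG)).
  by move=> x Bx; have [Gx|nGx] := pselect (G x); [right|left].
have [c Bfc cBG] := Bfcof _ bBG nJBG.
have cB : c `<=` B by move=> x /cBG [].
have := cBG _ (ptc _ Bfc); case => _; apply; apply: EG.
by exists (psi c) => //; exists c.
Qed.

Lemma wf_build {Q S : Type} (P' : set Q) (lt : Q -> Q -> Prop)
    (ok : Q * S -> Q * S -> Prop) :
  (forall p q, P' p -> P' q -> p <> q -> lt p q \/ lt q p) ->
  (forall A, A `<=` P' -> A !=set0 -> exists2 m, A m & forall q, A q -> ~ lt q m) ->
  (forall (sig : set (Q * S)) p0, P' p0 ->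
     (forall t t', sig t -> sig t' -> ok t t') ->
     (forall t, sig t -> P' t.1 /\ lt t.1 p0) ->
     (forall q, P' q -> lt q p0 -> exists s, sig (q, s)) ->
     exists s, ok (p0, s) (p0, s) /\
       forall t, sig t -> ok t (p0, s) /\ ok (p0, s) t) ->
  exists sig : set (Q * S), (forall t t', sig t -> sig t' -> ok t t') /\
    forall p, P' p -> exists s, sig (p, s).
Proof.
move=> tot wf step.
pose Pr (sig : set (Q * S)) := [/\ (forall t t', sig t -> sig t' -> ok t t'),
  (forall t, sig t -> P' t.1) &
  (forall t q, sig t -> P' q -> lt q t.1 -> exists s, sig (q, s))].
have [sig [[sok sP sinit] smax]] : exists sig, Pr sig /\ forall sig', sig `<` sig' -> ~ Pr sig'.
  apply: Zorn_bigcup => Fs FsP Ftot; split.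
  - move=> t t' [G1 F1 h1] [G2 F2 h2].
    have [G FG [s1 s2]] := chain2 Ftot F1 F2.
    by case: (FsP _ FG) => + _ _; apply; [exact: s1|exact: s2].
  - by move=> t [G FG Gt]; case: (FsP _ FG) => _ + _; apply.
  - move=> t q [G FG Gt] Pq ltq; case: (FsP _ FG) => _ _ /(_ _ _ Gt Pq ltq) [s Gs].
    by exists s; exists G.
exists sig; split => // p Pp; apply: contrapT => nop.
pose A := [set p | P' p /\ ~ exists s, sig (p, s)].
have [m [Pm nom] mmin] := wf A (fun p (h : A p) => proj1 h) (ex_intro _ p (conj Pp nop)).
have below : forall t, sig t -> P' t.1 /\ lt t.1 m.
  move=> [q s] sqs; split; first exact: (sP _ sqs).
  have qm : q <> m by move=> eqm; apply: nom; exists s; rewrite -eqm.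
  case: (tot _ _ (sP _ sqs) Pm qm) => // ltmq.
  by exfalso; apply: nom; exact: (sinit _ _ sqs Pm ltmq).
have full : forall q, P' q -> lt q m -> exists s, sig (q, s).
  move=> q Pq ltq; apply: contrapT => noq; exact: (mmin q (conj Pq noq) ltq).
have [s [okmm okm]] := step sig m Pm sok below full.
apply: (smax (sig `|` [set (m, s)])).
  apply: (@proper_of _ _ _ (m, s)).
  - by move=> t st; left.
  - by right.
  - by move=> sms; apply: nom; exists s.
split.
- move=> t t' [st|->] [st'|->] //.
  + exact: sok.
  + by case: (okm _ st).
  + by case: (okm _ st').
- by move=> t [/sP //|->].
- move=> t q [st|->] Pq ltq.
    by have [s' hs'] := sinit _ _ st Pq ltq; exists s'; left.
  by have [s' hs'] := full _ Pq ltq; exists s'; left.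
Qed.

Lemma union_le {U V} (S : set V) (A B : set U) : infinite_set S ->
  A #<= S -> B #<= S -> (A `|` B) #<= S.
Proof.
move=> Sinf AS BS.
have [v0 Sv0] := infinite_setN0 Sinf.
have [nu [nuS nuinj]] := inj_of_le v0 _ _ ((infiniteP S).1 Sinf).
have [h [hS hinj]] := hessenberg _ _ Sinf.
have [a [aS ainj]] := inj_of_le v0 _ _ AS.
have [b [bS binj]] := inj_of_le v0 _ _ BS.
pose g u := if pselect (A u) is left _ then h (a u, nu 0%N) else h (b u, nu 1%N).
apply: (@le_of_inj _ _ _ _ g).
  move=> u ABu; rewrite /g; case: pselect => Au; apply: hS; split => //=.
  - exact: aS.
  - exact: nuS.
  - by apply: bS; case: ABu.
  - exact: nuS.
move=> u u' ABu ABu'; rewrite /g.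
case: (pselect (A u)) => Au; case: (pselect (A u')) => Au' /hinj.
- by move=> /(_ (conj (aS _ Au) (nuS _ I)) (conj (aS _ Au') (nuS _ I))) [/ainj]; apply.
- have Bu' : B u' by case: ABu'.
  move=> /(_ (conj (aS _ Au) (nuS _ I)) (conj (bS _ Bu') (nuS _ I))) [_ /nuinj].
  by move=> /(_ I I).
- have Bu : B u by case: ABu.
  move=> /(_ (conj (bS _ Bu) (nuS _ I)) (conj (aS _ Au') (nuS _ I))) [_ /nuinj].
  by move=> /(_ I I).
- have Bu : B u by case: ABu.
  have Bu' : B u' by case: ABu'.
  by move=> /(_ (conj (bS _ Bu) (nuS _ I)) (conj (bS _ Bu') (nuS _ I))) [/binj]; apply.
Qed.

End Helpers.

Theorem mainTheorem2 (T : topologicalType) (I0 : set (set T)) (X : set T)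
  (F : set (X -> T)) (I : (X -> T) -> set (set T)) :
  polish_subspace [set: T] ->
  sigma_ideal_Borel_base [set: T] I0 ->
  polish_subspace X ->
  fine_pair F I ->
  (forall (U : Type) (M : set U),
     (forall f, F f -> cof_le (range f) (I f) M) -> (F #<= M)%card) ->
  (forall (Z : set T) (g : X -> T) (B : set T) (F0 : set (X -> T)),
     F g -> borel_in (range g) B -> ~ I g B ->
     F0 `<=` F -> (F0 #<= Z)%card ->
     g @^-1` B `<=` \bigcup_(h in F0) h @^-1` Z ->
     forall f, F f -> cof_le (range f) (I f) Z) ->
  exists A : set X, forall f, F f ->
    completely_nonmeasurable (I f) (range f) (f @` A).
Proof.
move=> _ _ _ fine H1 H2.
pose ub U (S : set U) := forall f, F f -> cof_le (range f) (I f) S.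
have ub_mono : forall U U' (S : set U) (S' : set U'), (S #<= S')%card -> ub U S -> ub U' S'.
  move=> U U' S S' le ubS f Ff; have [Bf [h1 h2 h3]] := ubS f Ff.
  by exists Bf; split => //; exact: card_le_trans h3 le.
have nonempty_pre : forall g B, F g -> borel_in (range g) B -> ~ I g B ->
    exists x, B (g x).
  move=> g B Fg bB nIB; apply: contrapT => nx.
  have := H2 set0 g B set0 Fg bB nIB (sub0set _) (card_ge0 _ _) _ g Fg.
  case.
    by move=> x /= Bgx; exfalso; apply: nx; exists x.
  move=> Bf [_ cof /card_le0P Bf0].
  by have [c + _] := cof B bB nIB; rewrite Bf0.
have ub_count : forall U (W : set U) f c, ub U W -> countable W -> F f ->
    borel_in (range f) c -> ~ I f c -> False.
  move=> U W f c ubW cW Ff bc nIc.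
  have [x _] := nonempty_pre f c Ff bc nIc.
  apply: (@cof_countable_false _ _ _ _ _ _ (fine f Ff).2 _ (ubW f Ff) cW bc nIc).
  by exists (f x); exists x.
have [R wR] := well_ordering_principle (set T).
have Rrefl : forall u, R u u.
  move=> u; have [|z [[zA zlb] _]] := wR (pred1 u).
    by exists u; rewrite inE.
  have Rzu := zlb u (eqxx u).
  have ez : z = u by exact/eqP.
  by rewrite ez in Rzu.
have Rtot : forall u v, R u v \/ R v u.
  move=> u v; have [|z [[zA zlb] _]] := wR [pred w | (w == u) || (w == v)].
    by exists u; rewrite inE eqxx.
  have Ru : R z u by apply: zlb; rewrite inE eqxx.
  have Rv : R z v by apply: zlb; rewrite inE eqxx orbT.
  move: zA; rewrite inE => /orP[/eqP ez|/eqP ez]; rewrite ez in Ru Rv.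
    by left.
  by right.
have Ranti : forall u v, R u v -> R v u -> u = v.
  move=> u v Ruv Rvu; have [|z [_ zuniq]] := wR [pred w | (w == u) || (w == v)].
    by exists u; rewrite inE eqxx.
  have mu : minimum_of R [pred w | (w == u) || (w == v)] u.
    split; first by rewrite inE eqxx.
    by move=> w; rewrite inE => /orP[/eqP ->|/eqP ->] //; apply: Rrefl.
  have mv : minimum_of R [pred w | (w == u) || (w == v)] v.
    split; first by rewrite inE eqxx orbT.
    by move=> w; rewrite inE => /orP[/eqP ->|/eqP ->] //; apply: Rrefl.
  by rewrite -(zuniq _ mu) -(zuniq _ mv).
have Rmin : forall (A : set (set T)), A !=set0 -> exists2 m, A m & forall u, A u -> R m u.
  move=> A [a Aa]; have [|z [[zA zlb] _]] := wR [pred u | `[< A u >]].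
    by exists a; apply/asboolP.
  exists z; first by move: zA => /asboolP.
  by move=> u Au; apply: zlb; apply/asboolP.
pose seg v := [set u | R u v /\ u <> v].
have [K [ubK Kmin]] : exists K : set (set T), ub _ K /\ forall k, K k -> ~ ub _ (seg k).
  have [ex|nex] := pselect (exists v, ub _ (seg v)).
    have [m ubm mmin] := Rmin [set v | ub _ (seg v)] ex.
    exists (seg m); split => // k [Rkm km] ubk.
    by apply: km; apply: Ranti => //; apply: mmin.
  exists setT; split; last by move=> k _ ubk; apply: nex; exists k.
  move=> f Ff; exists [set B | borel_in (range f) B /\ ~ I f B]; split => //.
    by move=> A bA nIA; exists A.
  exact: card_leT.
have [Kfin|Kinf] := pselect (finite_set K).
  exists set0 => f Ff B bB nIB; exfalso.
  exact: (ub_count _ _ _ _ ubK (finite_set_countable Kfin) Ff bB nIB).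
have [h [hK hinj]] := hessenberg _ _ Kinf.
have [jF [jFK jFinj]] := inj_of_le (set0 : set T) _ _ (H1 _ K ubK).
pose Dat := (set (set T) * (set T -> set T))%type.
pose Pd f (d : Dat) := F f -> [/\ d.1 `<=` [set B | borel_in (range f) B /\ ~ I f B],
  (forall A, borel_in (range f) A -> ~ I f A -> exists2 B, d.1 B & B `<=` A),
  (forall c, d.1 c -> K (d.2 c)) &
  (forall c c', d.1 c -> d.1 c' -> d.2 c = d.2 c' -> c = c')].
have [dat hdat] := choose_fun ((set0, fun _ => set0) : Dat) Pd.
have datP : forall f, F f -> Pd f (dat f).
  move=> f Ff; apply: hdat.
  have [Bf [h1 h2 h3]] := ubK f Ff.
  have [j [jK jinj]] := inj_of_le (set0 : set T) _ _ h3.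
  by exists (Bf, j) => _; split.
pose Cf f := (dat f).1.
pose jC f := (dat f).2.
pose iota (p : (X -> T) * set T) := h (jF p.1, jC p.1 p.2).
pose P' := [set p : (X -> T) * set T | F p.1 /\ Cf p.1 p.2].
have iotaK : forall p, P' p -> K (iota p).
  move=> [f c] [/= Ff Cc]; apply: hK; split => /=; first exact: jFK.
  by case: (datP f Ff Ff) => _ _ + _; apply.
have iotainj : forall p q, P' p -> P' q -> iota p = iota q -> p = q.
  move=> [f c] [f' c'] [/= Ff Cc] [/= Ff' Cc'] /hinj.
  have K1 := jFK _ Ff; have K1' := jFK _ Ff'.
  have K2 : K (jC f c) by case: (datP f Ff Ff) => _ _ + _; apply.
  have K2' : K (jC f' c') by case: (datP f' Ff' Ff') => _ _ + _; apply.
  move=> /(_ (conj K1 K2) (conj K1' K2')) [/jFinj] /(_ Ff Ff') ef; subst f'.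
  by case: (datP f Ff Ff) => _ _ _ /(_ _ _ Cc Cc') ec /ec ->.
pose lt p q := R (iota p) (iota q) /\ iota p <> iota q.
have tot : forall p q, P' p -> P' q -> p <> q -> lt p q \/ lt q p.
  move=> p q Pp Pq pq.
  have ne : iota p <> iota q by move/(iotainj _ _ Pp Pq).
  by case: (Rtot (iota p) (iota q)) => ?; [left|right]; split => // /esym.
have wf : forall A, A `<=` P' -> A !=set0 -> exists2 m, A m & forall q, A q -> ~ lt q m.
  move=> A AP [a Aa].
  have [v [m Am <-] vmin] := Rmin (iota @` A) (ex_intro _ (iota a) (ex_intro2 _ _ a Aa erefl)).
  exists m => // q Aq [Rqm nqm]; apply: nqm; apply: Ranti => //.
  by apply: vmin; exists q.
pose ok (t t' : ((X -> T) * set T) * (X * X)) :=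
  [/\ t.1.2 (t.1.1 t.2.1), t.1.2 (t.1.1 t.2.2), t'.1.1 t.2.1 <> t'.1.1 t'.2.2,
      (t.1 <> t'.1 -> t.1.1 t.2.2 <> t'.1.1 t'.2.2) & (t.1 = t'.1 -> t.2 = t'.2)].
have step : forall (sig : set (((X -> T) * set T) * (X * X))) p0, P' p0 ->
     (forall t t', sig t -> sig t' -> ok t t') ->
     (forall t, sig t -> P' t.1 /\ lt t.1 p0) ->
     (forall q, P' q -> lt q p0 -> exists s, sig (q, s)) ->
     exists s, ok (p0, s) (p0, s) /\
       forall t, sig t -> ok t (p0, s) /\ ok (p0, s) t.
  move=> sig [f c] [/= Ff Cc] sok below full.
  have [bc nIc] : borel_in (range f) c /\ ~ I f c.
    by case: (datP f Ff Ff) => + _ _ _; apply.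
  pose seg0 := seg (iota (f, c)).
  have nub0 : ~ ub _ seg0 := Kmin _ (iotaK (f, c) (conj Ff Cc)).
  have sig_seg : (sig #<= seg0)%card.
    apply: (@le_of_inj _ _ _ _ (fun t => iota t.1)).
      by move=> t st; case: (below t st) => _ [].
    move=> t t' st st' e.
    have e1 := iotainj _ _ (below _ st).1 (below _ st').1 e.
    case: (sok _ _ st st') => _ _ _ _ /(_ e1) e2.
    by rewrite [t]surjective_pairing [t']surjective_pairing e1 e2.
  have img_le : forall (phi : ((X -> T) * set T) * (X * X) -> T),
      ((phi @` sig) #<= seg0)%card.
    by move=> phi; apply: card_le_trans (card_image_le phi sig) sig_seg.
  pose Z1 := (fun t : ((X -> T) * set T) * (X * X) => t.1.1 t.2.2) @` sig.
  pose W1 := (fun t : ((X -> T) * set T) * (X * X) => f t.2.1) @` sig.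
  have [x [cx xav]] : exists x, c (f x) /\
      forall t, sig t -> t.1.1 x <> t.1.1 t.2.2.
    apply: contrapT => nx.
    pose F0 := (fun t : ((X -> T) * set T) * (X * X) => t.1.1) @` sig.
    have cover : f @^-1` c `<=` \bigcup_(h in F0) h @^-1` Z1.
      move=> x cx.
      have [t [st e]] : exists t, sig t /\ t.1.1 x = t.1.1 t.2.2.
        apply: contrapT => nt; apply: nx; exists x; split => // t st e.
        by apply: nt; exists t.
      exists t.1.1; first by exists t.
      by rewrite /preimage /= e; exists t.
    have F0F : F0 `<=` F by move=> _ [t st <-]; case: (below _ st) => -[].
    have F0Z1 : (F0 #<= Z1)%card.
      have [[t0 st0]|nsig] := pselect (exists t, sig t); last first.
        have -> : F0 = set0.
          by apply/seteqP; split => // g [t st _]; apply: nsig; exists t.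
        exact: card_ge0.
      have [sel hsel] := choose_fun t0 (fun (g : X -> T) t => sig t /\ t.1.1 = g).
      apply: (@le_of_inj _ _ _ _ (fun g => (sel g).1.1 (sel g).2.2)).
        move=> g F0g; have [|ss es] := hsel g; first by case: F0g => t st <-; exists t.
        by exists (sel g).
      move=> g g' F0g F0g' e.
      have [|ss es] := hsel g; first by case: F0g => t st <-; exists t.
      have [|ss' es'] := hsel g'; first by case: F0g' => t st <-; exists t.
      rewrite -es -es'; apply: contrapT => ne.
      case: (sok _ _ ss ss') => _ _ _ + _.
      by move=> /(_ (fun e1 => ne (congr1 fst e1))); apply.
    have ubZ1 := H2 Z1 f c F0 Ff bc nIc F0F F0Z1 cover.
    by apply: nub0; apply: (ub_mono _ _ _ _ (img_le _) ubZ1).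
  have [y [cy yZ1 yx yW1]] : exists y, [/\ c (f y), ~ Z1 (f y), f y <> f x &
      ~ W1 (f y)].
    apply: contrapT => ny.
    pose Z2 := Z1 `|` W1 `|` [set f x].
    have cover : f @^-1` c `<=` \bigcup_(h in [set f]) h @^-1` Z2.
      move=> y cy; exists f => //; rewrite /preimage /=.
      apply: contrapT => nZ; apply: ny; exists y; split => //.
      - by move=> hh; apply: nZ; left; left.
      - by move=> hh; apply: nZ; right.
      - by move=> hh; apply: nZ; left; right.
    have F0F : [set f] `<=` F by move=> g ->.
    have F0Z2 : ([set f] #<= Z2)%card.
      apply: (@le_of_inj _ _ _ _ (fun _ => f x)).
        by move=> g _; right.
      by move=> g g' -> ->.
    have ubZ2 := H2 Z2 f c [set f] Ff bc nIc F0F F0Z2 cover.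
    have [seg_fin|seg_inf] := pselect (finite_set seg0).
      apply: (ub_count _ _ f c ubZ2 _ Ff bc nIc).
      apply: finite_set_countable.
      rewrite !finite_setU; split; [split|]; try exact: finite_set1.
        exact: card_le_finite (img_le _) seg_fin.
      exact: card_le_finite (img_le _) seg_fin.
    apply: nub0; apply: (ub_mono _ _ _ _ _ ubZ2).
    apply: union_le => //; first by apply: union_le => //; exact: img_le.
    have [v0 sv0] := infinite_setN0 seg_inf.
    apply: (@le_of_inj _ _ _ _ (fun _ => v0)) => //.
    by move=> ? ? -> ->.
  have nself : forall t, sig t -> t.1 <> (f, c).
    by move=> t st e; case: (below _ st) => _ [_]; rewrite e.
  exists (x, y); split.
    split => //=.
    - by move=> e; apply: yx; rewrite e.
  move=> t st; have [u1 u2 _ _ _] := sok _ _ st st; split; split => //=.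
  - by move=> e; apply: yW1; exists t.
  - by move=> _ e; apply: yZ1; exists t.
  - by move=> /(nself _ st).
  - exact: xav.
  - by move=> _ e; apply: yZ1; exists t.
  - by move=> e; exfalso; apply: (nself _ st); rewrite -e.
have [sig [sok sall]] := wf_build P' lt ok tot wf step.
exists [set x | exists t, sig t /\ t.2.1 = x] => f Ff B bB nIB.
have [c Cc cB] : exists2 c, Cf f c & c `<=` B.
  by case: (datP f Ff Ff) => _ + _ _; apply.
have [s sfs] := sall (f, c) (conj Ff Cc).
have [/= cx cy _ _ _] := sok _ _ sfs sfs.
split.
  by exists (f s.1); split; [exists s.1 => //; exists ((f, c), s)|apply: cB].
exists (f s.2); split; first exact: cB.
move=> [x [t [st <-]] ex].
by case: (sok _ _ st sfs) => _ _ /=; rewrite ex.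
Qed.
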